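(* Let $q>1$, $\delta:=[2(q+1)]^{1/(q-1)}$, and let $W$ be a (small) neighborhood of $0$ in $\mathbb{R}$. There are constants $C_6,C_7>0$ such that for all $a\in[1/2,1]$, all $0<\xi\leq C_6$, all $0<\eta\leq C_6$, and every $C^1$ function $r:[0,\delta]\to\mathbb{R}$ with $\sup_{t\in[0,\delta]}\big(|r(t)|+|r'(t)|\big)\leq\xi$, the map $f_{a,r}:[0,\delta]\to\mathbb{R}$, $f_{a,r}(t):=\frac{t^2}{2}-a\frac{t^{q+1}}{q+1}+r(t)$, satisfies $$t\in[0,\delta]\setminus W,\ |f'_{a,r}(t)|\leq\eta\ \Longrightarrow\ |t-a^{-1/(q-1)}|\leq C_7(\xi+\eta),$$ and $$\inf_{t\in[0,\delta]\setminus W,\ |f'_{a,r}(t)|\leq\eta}f_{a,r}(t)\geq\Big(\frac12-\frac{1}{q+1}\Big)\Big(\frac1a\Big)^{2/(q-1)}-C_7(\xi+\eta).$$ *)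

(* Defs.v *)
From Stdlib Require Import Reals Lra.
Open Scope R_scope.

(* Real power t^p for t >= 0 with the convention 0^p = 0 (p > 0 in use). *)
Definition rpow (t p : R) : R := if Rlt_dec 0 t then Rpower t p else 0.

Definition delta (q : R) : R := Rpower (2 * (q + 1)) (1 / (q - 1)).

Definition Icc0 (d : R) (t : R) : Prop := 0 <= t <= d.

Definition has_deriv_on (d : R) (r r' : R -> R) : Prop :=
  forall t, Icc0 d t ->
    limit1_in (fun s => (r s - r t) / (s - t))
              (fun s => Icc0 d s /\ s <> t) (r' t) t.

Definition C1_on (d : R) (r r' : R -> R) : Prop :=
  has_deriv_on d r r' /\
  (forall t, Icc0 d t -> limit1_in r' (Icc0 d) (r' t) t).

Definition f_ar (q a : R) (r : R -> R) (t : R) : R :=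
  t ^ 2 / 2 - a * rpow t (q + 1) / (q + 1) + r t.

Definition df_ar (q a : R) (r' : R -> R) (t : R) : R :=
  t - a * rpow t q + r' t.

Definition nbhd0 (W : R -> Prop) : Prop :=
  exists eps, 0 < eps /\ forall t, Rabs t < eps -> W t.

(* Main.v *)
Require Import Defs.
From Stdlib Require Import Reals Lra.
Open Scope R_scope.

Lemma dpl_ext (f g : R -> R) x l : (forall y, f y = g y) ->
  derivable_pt_lim f x l -> derivable_pt_lim g x l.
Proof. intros E H eps He. destruct (H eps He) as [d Hd]. exists d.
  intros h Hh Hh'. rewrite <- !E. apply Hd; auto. Qed.

Lemma negabs x : - Rabs x <= x.
Proof. pose proof (Rle_abs (-x)). rewrite Rabs_Ropp in H. lra. Qed.

Lemma mvt_upper (f f' : R -> R) lo hi K x y :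
  (forall c, lo <= c <= hi -> derivable_pt_lim f c (f' c)) ->
  (forall c, lo <= c <= hi -> Rabs (f' c) <= K) ->
  lo <= x <= hi -> lo <= y <= hi -> Rabs (f x - f y) <= K * Rabs (x - y).
Proof.
  intros Hd HK Hx Hy.
  destruct (Rtotal_order x y) as [H|[H|H]].
  - destruct (MVT_cor2 f f' x y H) as [c [Hc1 Hc2]].
    { intros c Hc. apply Hd; lra. }
    rewrite Rabs_minus_sym, Hc1, (Rabs_minus_sym x y), Rabs_mult.
    apply Rmult_le_compat_r; [apply Rabs_pos| apply HK; lra].
  - subst. replace (f y - f y) with 0 by ring. replace (y - y) with 0 by ring.
    rewrite Rabs_R0, Rmult_0_r. lra.
  - destruct (MVT_cor2 f f' y x H) as [c [Hc1 Hc2]].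
    { intros c Hc. apply Hd; lra. }
    rewrite Hc1, Rabs_mult.
    apply Rmult_le_compat_r; [apply Rabs_pos| apply HK; lra].
Qed.

Lemma mvt_lower (f f' : R -> R) lo hi k x y :
  (forall c, lo <= c <= hi -> derivable_pt_lim f c (f' c)) ->
  (forall c, lo <= c <= hi -> k <= Rabs (f' c)) ->
  lo <= x <= hi -> lo <= y <= hi -> k * Rabs (x - y) <= Rabs (f x - f y).
Proof.
  intros Hd HK Hx Hy.
  destruct (Rtotal_order x y) as [H|[H|H]].
  - destruct (MVT_cor2 f f' x y H) as [c [Hc1 Hc2]].
    { intros c Hc. apply Hd; lra. }
    rewrite (Rabs_minus_sym (f x)), Hc1, (Rabs_minus_sym x y), Rabs_mult.
    apply Rmult_le_compat_r; [apply Rabs_pos| apply HK; lra].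
  - subst. replace (f y - f y) with 0 by ring. replace (y - y) with 0 by ring.
    rewrite Rabs_R0, Rmult_0_r. lra.
  - destruct (MVT_cor2 f f' y x H) as [c [Hc1 Hc2]].
    { intros c Hc. apply Hd; lra. }
    rewrite Hc1, Rabs_mult.
    apply Rmult_le_compat_r; [apply Rabs_pos| apply HK; lra].
Qed.

Lemma exp_le' x y : x <= y -> exp x <= exp y.
Proof. intros [H|H]. left; apply exp_increasing; auto. subst; lra. Qed.

Lemma ln_le' x y : 0 < x -> x <= y -> ln x <= ln y.
Proof. intros H [H1|H1]. left; apply ln_increasing; auto. subst; lra. Qed.

Lemma Rpower_bounds s x L : 0 < s -> Rabs (ln s) <= L ->
  exp (- (Rabs x * L)) <= Rpower s x <= exp (Rabs x * L).
Proof.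
  intros Hs HL. unfold Rpower.
  assert (Rabs (x * ln s) <= Rabs x * L).
  { rewrite Rabs_mult. apply Rmult_le_compat_l; auto. apply Rabs_pos. }
  pose proof (Rle_abs (x * ln s)). pose proof (negabs (x * ln s)).
  split; apply exp_le'; lra.
Qed.

Theorem lemma3p4 (q : R) (W : R -> Prop) :
  1 < q -> nbhd0 W ->
  exists C6 C7 : R, 0 < C6 /\ 0 < C7 /\
    forall (a xi eta : R) (r r' : R -> R),
      1 / 2 <= a <= 1 ->
      0 < xi <= C6 ->
      0 < eta <= C6 ->
      C1_on (delta q) r r' ->
      (forall t, Icc0 (delta q) t -> Rabs (r t) + Rabs (r' t) <= xi) ->
      (forall t, Icc0 (delta q) t -> ~ W t ->
         Rabs (df_ar q a r' t) <= eta ->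
         Rabs (t - Rpower a (- (1 / (q - 1)))) <= C7 * (xi + eta)) /\
      (forall t, Icc0 (delta q) t -> ~ W t ->
         Rabs (df_ar q a r' t) <= eta ->
         (1 / 2 - 1 / (q + 1)) * Rpower (/ a) (2 / (q - 1)) - C7 * (xi + eta)
           <= f_ar q a r t).
Proof.
  intros Hq [eps [Heps HW]].
  set (p := q - 1).
  assert (Hp : 0 < p) by (unfold p; lra).
  set (m := Rmin eps 1).
  assert (Hm : 0 < m) by (unfold m; apply Rmin_pos; lra).
  assert (Hm1 : m <= 1) by (unfold m; apply Rmin_r).
  assert (Hme : m <= eps) by (unfold m; apply Rmin_l).
  set (d := delta q).
  assert (Hd1 : 1 < d).
  { unfold d. rewrite <- exp_0. unfold delta, Rpower. apply exp_increasing.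
    apply Rmult_lt_0_compat.
    - apply Rdiv_lt_0_compat; lra.
    - pose proof (ln_increasing 1 (2 * (q + 1)) ltac:(lra) ltac:(lra)) as H.
      rewrite ln_1 in H; exact H. }
  set (L := Rabs (ln m) + Rabs (ln d)).
  assert (HL : forall s, m <= s <= d -> Rabs (ln s) <= L).
  { intros s Hs. apply Rabs_le.
    pose proof (ln_le' m s Hm (proj1 Hs)).
    pose proof (ln_le' s d ltac:(lra) (proj2 Hs)).
    pose proof (negabs (ln m)). pose proof (Rle_abs (ln d)).
    pose proof (Rabs_pos (ln m)). pose proof (Rabs_pos (ln d)).
    unfold L; lra. }
  set (c := p * exp (- (Rabs (p - 1) * L))).
  assert (Hc : 0 < c) by (unfold c; apply Rmult_lt_0_compat; [lra| apply exp_pos]).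
  set (K0 := 2 / (m * c)).
  assert (HK0 : 0 < K0) by (unfold K0; apply Rdiv_lt_0_compat; [lra| apply Rmult_lt_0_compat; lra]).
  set (M := d + exp (Rabs q * L)).
  assert (HM : 0 < M) by (unfold M; pose proof (exp_pos (Rabs q * L)); lra).
  exists 1, (K0 + M * K0 + 1).
  split; [lra|]. split; [pose proof (Rmult_lt_0_compat M K0 HM HK0); lra|].
  intros a xi eta r r' Ha Hxi Heta _ Hr.
  set (t0 := Rpower a (- (1 / (q - 1)))).
  fold p in t0.
  assert (Hlna : ln a <= 0) by (pose proof (ln_le' a 1 ltac:(lra) ltac:(lra)) as H; rewrite ln_1 in H; exact H).
  assert (Ht0a : 1 <= t0).
  { rewrite <- exp_0. unfold t0, Rpower. apply exp_le'.
    assert (0 <= 1/p) by (apply Rlt_le, Rdiv_lt_0_compat; lra). nra. }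
  assert (Ht0b : t0 <= d).
  { unfold t0, d, delta, Rpower. fold p. apply exp_le'.
    assert (-ln a <= ln (2 * (q+1))).
    { rewrite <- ln_Rinv by lra. apply ln_le'.
      apply Rinv_0_lt_compat; lra.
      apply Rmult_le_reg_l with a; [lra|]. rewrite Rinv_r by lra. nra. }
    assert (0 <= 1/p) by (apply Rlt_le, Rdiv_lt_0_compat; lra). nra. }
  assert (Hat0 : a * Rpower t0 p = 1).
  { unfold t0. rewrite Rpower_mult.
    unfold Rpower at 1. replace (- (1 / p) * p * ln a) with (ln (/ a)).
    - rewrite exp_ln by (apply Rinv_0_lt_compat; lra). field; lra.
    - rewrite ln_Rinv by lra. field; lra. }
  assert (Key : forall t, Icc0 d t -> ~ W t -> Rabs (df_ar q a r' t) <= eta ->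
            m <= t /\ Rabs (t - t0) <= K0 * (xi + eta)).
  { intros t Ht HnW Hdf.
    assert (Hte : eps <= t).
    { destruct (Rle_or_lt eps t) as [H|H]; auto. exfalso; apply HnW, HW.
      unfold Icc0 in Ht. rewrite Rabs_pos_eq; lra. }
    assert (Htm : m <= t) by lra.
    split; auto.
    unfold Icc0 in Ht.
    assert (Hlow : c * Rabs (t - t0) <= Rabs (Rpower t p - Rpower t0 p)).
    { apply (mvt_lower (fun s => Rpower s p) (fun s => p * Rpower s (p - 1)) m d);
        try lra.
      - intros s Hs. apply derivable_pt_lim_power; lra.
      - intros s Hs. unfold c.
        destruct (Rpower_bounds s (p-1) L ltac:(lra) (HL s Hs)) as [H1 H2].
        rewrite (Rabs_pos_eq (p * Rpower s (p - 1))).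
        + apply Rmult_le_compat_l; lra.
        + apply Rmult_le_pos; [lra|]. pose proof (exp_pos (- (Rabs (p - 1) * L))); lra. }
    assert (Hrq : rpow t q = t * Rpower t p).
    { unfold rpow. destruct (Rlt_dec 0 t); [|lra].
      replace q with (1 + p) by (unfold p; ring). rewrite Rpower_plus, Rpower_1; auto. }
    assert (Heq : df_ar q a r' t = t * a * (Rpower t0 p - Rpower t p) + r' t).
    { unfold df_ar. rewrite Hrq.
      replace (t * a * (Rpower t0 p - Rpower t p)) with (t * (a * Rpower t0 p) - a * (t * Rpower t p)) by ring.
      rewrite Hat0. ring. }
    pose proof (Hr t Ht) as Hrt. pose proof (Rabs_pos (r t)).
    assert (Hg : Rabs (t * a * (Rpower t0 p - Rpower t p)) <= xi + eta).
    { replace (t * a * (Rpower t0 p - Rpower t p)) with (df_ar q a r' t - r' t)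
        by (rewrite Heq; ring).
      pose proof (Rabs_triang (df_ar q a r' t) (- r' t)). rewrite Rabs_Ropp in H0.
      unfold Rminus. lra. }
    rewrite Rabs_mult, Rabs_mult, (Rabs_pos_eq t), (Rabs_pos_eq a), Rabs_minus_sym in Hg by lra.
    set (D := Rabs (t - t0)) in *. set (X := Rabs (Rpower t p - Rpower t0 p)) in *.
    assert (HD : 0 <= D) by apply Rabs_pos.
    assert (m * c * D <= 2 * (xi + eta)).
    { assert (m * (c * D) <= t * X) by (apply Rmult_le_compat; nra).
      assert (t * X <= 2 * (t * a * X)).
      { assert (0 <= t * X) by (apply Rmult_le_pos; [lra| apply Rabs_pos]). nra. }
      nra. }
    unfold K0. apply Rmult_le_reg_l with (m * c); [apply Rmult_lt_0_compat; lra|].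
    replace (m * c * (2 / (m * c) * (xi + eta))) with (2 * (xi + eta)) by (field; lra).
    lra. }
  split.
  - intros t Ht HnW Hdf. destruct (Key t Ht HnW Hdf) as [_ H].
    fold t0. assert (0 <= M * K0 * (xi + eta)) by (apply Rmult_le_pos; [apply Rmult_le_pos|]; lra).
    nra.
  - intros t Ht HnW Hdf. destruct (Key t Ht HnW Hdf) as [Htm HD].
    unfold Icc0 in Ht.
    set (F := fun s => s ^ 2 / 2 - a * Rpower s (q + 1) / (q + 1)).
    assert (HF : Rabs (F t - F t0) <= M * Rabs (t - t0)).
    { apply (mvt_upper F (fun s => s - a * Rpower s q) m d); try lra.
      - intros s Hs.
        pose proof (derivable_pt_lim_scal _ (/2) s _ (derivable_pt_lim_pow s 2)) as H1.
        pose proof (derivable_pt_lim_scal _ (a / (q+1)) s _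
                      (derivable_pt_lim_power s (q+1) ltac:(lra))) as H2.
        pose proof (derivable_pt_lim_minus _ _ s _ _ H1 H2) as H3.
        replace (s - a * Rpower s q) with
          (/ 2 * (INR 2 * s ^ Init.Nat.pred 2) - a / (q + 1) * ((q + 1) * Rpower s (q + 1 - 1))).
        + refine (dpl_ext _ _ _ _ _ H3). intros y. unfold minus_fct, mult_real_fct, F. field. lra.
        + replace (q + 1 - 1) with q by ring. simpl. field. lra.
      - intros s Hs.
        destruct (Rpower_bounds s q L ltac:(lra) (HL s Hs)) as [H1 H2].
        pose proof (exp_pos (- (Rabs q * L))).
        pose proof (Rabs_triang s (- (a * Rpower s q))). rewrite Rabs_Ropp in H0.
        rewrite Rabs_mult, (Rabs_pos_eq s), (Rabs_pos_eq a), (Rabs_pos_eq (Rpower s q)) in H0 by lra.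
        unfold M. unfold Rminus. assert (a * Rpower s q <= exp (Rabs q * L)) by nra. lra. }
    assert (Hrt : rpow t (q+1) = Rpower t (q+1)).
    { unfold rpow. destruct (Rlt_dec 0 t); [auto|lra]. }
    assert (Hf : f_ar q a r t = F t + r t) by (unfold f_ar, F; rewrite Hrt; reflexivity).
    assert (HFt0 : F t0 = (1 / 2 - 1 / (q + 1)) * Rpower (/ a) (2 / (q - 1))).
    { assert (E2 : t0 ^ 2 = Rpower (/ a) (2 / (q - 1))).
      { rewrite <- Rpower_pow by lra. unfold t0. rewrite Rpower_mult.
        unfold Rpower. rewrite ln_Rinv by lra. f_equal. simpl. unfold p. field. lra. }
      unfold F. replace (q + 1) with (p + INR 2) at 1 by (simpl; unfold p; ring).
      rewrite Rpower_plus, Rpower_pow, E2 by lra.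
      replace (a * (Rpower t0 p * Rpower (/ a) (2 / (q - 1))))
        with ((a * Rpower t0 p) * Rpower (/ a) (2 / (q - 1))) by ring.
      rewrite Hat0. field. lra. }
    rewrite Hf. replace ((1/2 - 1/(q+1)) * Rpower (/a) (2/p)) with (F t0) by (rewrite HFt0; reflexivity).
    pose proof (Hr t Ht). pose proof (Rabs_pos (r' t)). pose proof (negabs (r t)).
    pose proof (negabs (F t - F t0)).
    assert (M * Rabs (t - t0) <= M * (K0 * (xi + eta))) by (apply Rmult_le_compat_l; lra).
    assert (0 <= K0 * (xi + eta)) by (apply Rmult_le_pos; lra).
    nra.
Qed.
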